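(* Let $\mathcal{R}$ be an MSR system satisfying the protocol format assumptions of the context, let $\mathcal{R}_{\mathsf{intf}}$ be its interface model, and let $\mathcal{R}^{\mathsf{role}}_i$ and $\mathcal{R}^e_{\mathsf{env}}$ be the role and environment components obtained by splitting the I/O rules (as in the context). For a fresh name $\mathit{rid}$, let $\mathcal{R}^{\mathsf{role}}_i(\mathit{rid})$ be $\mathcal{R}^{\mathsf{role}}_i$ with the thread identifier fixed to $\mathit{rid}$. Let $\Lambda = \bigcup_i\{a\theta \mid \exists l,r.\ l\xrightarrow{a} r\in\mathcal{R}^i_{\mathsf{io}},\ \mathrm{range}(\theta)\subseteq\mathcal{M}\}$ be the set of all ground instances of synchronization labels. Then $$\mathrm{Tr}\Big(\big(|||_{i,\mathit{rid}}\ \mathcal{R}^{\mathsf{role}}_i(\mathit{rid})\big)\ \|_{\Lambda}\ \mathcal{R}^e_{\mathsf{env}}\Big)\subseteq \mathrm{Tr}(\mathcal{R}_{\mathsf{intf}}).$$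
   Context: Terms and messages. Fix a finite signature $\Sigma$ of function symbols, a set of names $\mathcal{N} = \mathit{fresh} \cup \mathit{pub}$ and a set of variables $\mathcal{V}$; terms are $\mathcal{T} = \mathcal{T}_\Sigma(\mathcal{N}\cup\mathcal{V})$, messages $\mathcal{M}$ are ground terms, and an equational theory $\mathsf{E}$ induces $=_\mathsf{E}$. Facts and MSR. A fact signature $\Sigma_{\mathsf{facts}} = \Sigma_{\mathsf{lin}} \uplus \Sigma_{\mathsf{per}}$ is partitioned into linear and persistent symbols; facts $F(t_1,\dots,t_k)$ are partitioned accordingly into $\mathcal{F}_{\mathsf{lin}}\uplus\mathcal{F}_{\mathsf{per}}$. An MSR rule $l \xrightarrow{a} r$ has multisets of facts $l,a,r$. An MSR system induces an LTS whose states are multisets of ground facts, initial state empty, with transition $S \xrightarrow{a'} (S \setminus^{\#} (l' \cap^{\#} \mathcal{F}_{\mathsf{lin}})) \cup^{\#} r'$ whenever $l \xrightarrow{a} r$ is a rule, $\theta$ a ground instantiation of its variables, $l' \xrightarrow{a'} r' =_\mathsf{E} (l\xrightarrow{a} r)\theta$, $l' \cap^{\#} \mathcal{F}_{\mathsf{lin}} \subseteq^{\#} S$ and $\mathrm{set}(l') \cap \mathcal{F}_{\mathsf{per}} \subseteq \mathrm{set}(S)$ (multiset operations). For an LTS $X$, $\mathrm{Tr}(X)$ is the set of label sequences of finite executions from the initial state. Reserved symbols: $\mathsf{K}\in\Sigma_{\mathsf{per}}$ and $\mathsf{Fr},\mathsf{in},\mathsf{out}\in\Sigma_{\mathsf{lin}}$.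 Format assumptions. $\Sigma_{\mathsf{facts}} = \Sigma_{\mathsf{act}} \uplus \Sigma_{\mathsf{env}} \uplus \biguplus_{1\le i\le n} \Sigma^i_{\mathsf{state}}$. $\Sigma_{\mathsf{env}}$ contains disjoint subsets $\Sigma_{\mathsf{in}},\Sigma_{\mathsf{out}}$ with $\mathsf{Fr},\mathsf{in}\in\Sigma_{\mathsf{in}}$, $\mathsf{out}\in\Sigma_{\mathsf{out}}$, $\mathsf{K}\in\Sigma_{\mathsf{env}}\setminus(\Sigma_{\mathsf{in}}\cup\Sigma_{\mathsf{out}})$, and a setup symbol $\mathsf{Setup}_i\in\Sigma_{\mathsf{in}}$ for each role $i$. $\mathcal{R} = \mathcal{R}_{\mathsf{env}} \uplus \biguplus_{i}\mathcal{R}_i$, where $\mathcal{R}_{\mathsf{env}}$ contains the attacker message deduction rules and the freshness rule. All rule labels use only symbols of $\Sigma_{\mathsf{act}}$. Rules of $\mathcal{R}_{\mathsf{env}}$ use only $\Sigma_{\mathsf{env}}$ symbols in premises and conclusions; a rule producing $\mathsf{Setup}_i$ lies in $\mathcal{R}_{\mathsf{env}}$, produces nothing else and has empty label (a role setup rule). Each rule $l\xrightarrow{a} r\in\mathcal{R}_i$ has premise symbols in $\Sigma^i_{\mathsf{state}}\cup\Sigma_{\mathsf{in}}$, conclusion symbols in $\Sigma^i_{\mathsf{state}}\cup\Sigma_{\mathsf{out}}$, at least one state fact in $r$, and for some $k_i\ge1$ the first $k_i$ arguments of all its state and $\mathsf{Setup}_i$ facts coincide, the first one being a thread identifier $\mathit{rid}$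 of fresh type. Interface model. $\Sigma_{\mathsf{in}}^- = \Sigma_{\mathsf{in}}\setminus\{\mathsf{Setup}_i\}_i$. For $F\in\Sigma^-_{\mathsf{in}}\cup\Sigma_{\mathsf{out}}$ and role $i$ add a buffer symbol $F_i$; let $\Sigma^i_{\mathsf{role}} = \Sigma^i_{\mathsf{state}}\cup\{F_i\}$. $\mathcal{R}'_i$ replaces in rules of $\mathcal{R}_i$ each $F(\bar t)$ with $F\in\Sigma^-_{\mathsf{in}}\cup\Sigma_{\mathsf{out}}$ by $F_i(\mathit{rid},\bar t)$. $\mathcal{R}_{\mathsf{io}}$ contains, for each role $i$, $[F(\bar x)]\xrightarrow{[]}[F_i(\mathit{rid},\bar x)]$ for $F\in\Sigma^-_{\mathsf{in}}$, $[G_i(\mathit{rid},\bar x)]\xrightarrow{[]}[G(\bar x)]$ for $G\in\Sigma_{\mathsf{out}}$, and the role setup rules (removed from $\mathcal{R}_{\mathsf{env}}$, leaving $\mathcal{R}^-_{\mathsf{env}}$). $\mathcal{R}_{\mathsf{intf}} = \mathcal{R}^-_{\mathsf{env}}\uplus\mathcal{R}_{\mathsf{io}}\uplus\biguplus_i\mathcal{R}'_i$. Decomposition. Each I/O rule $\rho$ of role $i$ with variables $\bar y$ (including $\mathit{rid}$) gets a fresh action symbol $\lambda_\rho$ (the synchronization label $\lambda_\rho(\bar y)$), and is split into a role part (in $\mathcal{R}^i_{\mathsf{io}}$) and an environment part (in $\mathcal{R}^e_{\mathsf{io}}$): for the input rule of $F$, role part $[]\xrightarrow{[\lambda_\rho(\bar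 y)]}[F_i(\mathit{rid},\bar x)]$ and environment part $[F(\bar x)]\xrightarrow{[\lambda_\rho(\bar y)]}[]$; for the output rule of $G$, role part $[G_i(\mathit{rid},\bar x)]\xrightarrow{[\lambda_\rho(\bar y)]}[]$ and environment part $[]\xrightarrow{[\lambda_\rho(\bar y)]}[G(\bar x)]$; for a setup rule $l\xrightarrow{[]}[\mathsf{Setup}_i(\bar u)]$, role part $[]\xrightarrow{[\lambda_\rho(\bar y)]}[\mathsf{Setup}_i(\bar u)]$ and environment part $l\xrightarrow{[\lambda_\rho(\bar y)]}[]$. Then $\mathcal{R}^{\mathsf{role}}_i = \mathcal{R}'_i\uplus\mathcal{R}^i_{\mathsf{io}}$ and $\mathcal{R}^e_{\mathsf{env}} = \mathcal{R}^-_{\mathsf{env}}\uplus\mathcal{R}^e_{\mathsf{io}}$. Compositions. $|||_{i,\mathit{rid}} X_{i,\mathit{rid}}$ has as states functions $f$ mapping each $(i,\mathit{rid})$ to a state of $X_{i,\mathit{rid}}$, initial state the pointwise initial states, and transitions $f\xrightarrow{a} f[(i,\mathit{rid})\mapsto S']$ whenever $f(i,\mathit{rid})\xrightarrow{a}S'$ in $X_{i,\mathit{rid}}$. $X_1\|_\Lambda X_2$ has states $(S_1,S_2)$ and transitions $(S_1,S_2)\xrightarrow{a}(S_1',S_2')$ if either (i) $a=[]$ and for some $a'$ with $a'=_\mathsf{E}b$ for some $b\in\Lambda$, $S_1\xrightarrow{a'}S_1'$ and $S_2\xrightarrow{a'}S_2'$; or (ii) $a$ is not $\mathsf{E}$-equal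 to an element of $\Lambda$, $S_1\xrightarrow{a}S_1'$ and $S_2'=S_2$; or (iii) $a$ is not $\mathsf{E}$-equal to an element of $\Lambda$, $S_2\xrightarrow{a}S_2'$ and $S_1'=S_1$. *)

(* Defs.v *)
From Stdlib Require Import List Permutation Arith Bool.
Import ListNotations.
Set Implicit Arguments.

Inductive vsort := SFresh | SPub | SMsg.
Definition var : Type := (vsort * nat)%type.
Definition var_eq_dec : forall x y : var, {x = y} + {x <> y}.
Proof. decide equality; [apply Nat.eq_dec | decide equality]. Defined.

Section Terms.
Variables (Fun Nm : Type).

Inductive term : Type :=
| TVar (v : var)
| TName (n : Nm)
| TApp (f : Fun) (ts : list term).

Fixpoint tsubst (s : var -> term) (t : term) : term :=
  match t with
  | TVar v => s v
  | TName n => TName n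
  | TApp f ts => TApp f (map (tsubst s) ts)
  end.

Fixpoint tvars (t : term) : list var :=
  match t with
  | TVar v => [v]
  | TName _ => []
  | TApp _ ts => flat_map tvars ts
  end.

Definition ground (t : term) : Prop := tvars t = [].

Inductive eqE (E : term -> term -> Prop) : term -> term -> Prop :=
| eqE_ax l r (s : var -> term) : E l r -> eqE E (tsubst s l) (tsubst s r)
| eqE_refl t : eqE E t t
| eqE_sym t u : eqE E t u -> eqE E u t
| eqE_trans t u w : eqE E t u -> eqE E u w -> eqE E t w
| eqE_cong f ts us : Forall2 (eqE E) ts us -> eqE E (TApp f ts) (TApp f us).

Record fact (X : Type) := mkfact { fsym : X; fargs : list term }.
Record rule (X : Type) :=
  mkrule { prem : list (fact X); lab : list (fact X); concl : list (fact X) }.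

Definition fsubst X (s : var -> term) (f : fact X) : fact X :=
  mkfact (fsym f) (map (tsubst s) (fargs f)).
Definition rsubst X (s : var -> term) (r : rule X) : rule X :=
  mkrule (map (fsubst s) (prem r)) (map (fsubst s) (lab r)) (map (fsubst s) (concl r)).
Definition fvars X (f : fact X) : list var := flat_map tvars (fargs f).
Definition rule_vars X (r : rule X) : list var :=
  nodup var_eq_dec (flat_map (@fvars X) (prem r ++ lab r ++ concl r)).
Definition fground X (f : fact X) : Prop := Forall ground (fargs f).
Definition ground_inst (s : var -> term) : Prop := forall v, ground (s v).

Definition feqE E X (f g : fact X) : Prop :=
  fsym f = fsym g /\ Forall2 (eqE E) (fargs f) (fargs g).
Definition meqE E X (a b : list (fact X)) : Prop :=
  exists a2, Permutation a a2 /\ Forall2 (fun f g => feqE E f g) a2 b.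

End Terms.
Arguments TVar {Fun Nm} v.
Arguments TName {Fun Nm} n.
Arguments TApp {Fun Nm} f ts.
Arguments mkfact {Fun Nm X} fsym fargs.
Arguments mkrule {Fun Nm X} prem lab concl.

Record lts (L : Type) := mklts {
  lst : Type;
  linit : lst;
  lstep : lst -> L -> lst -> Prop }.

Inductive exec (L : Type) (X : lts L) : list L -> lst X -> Prop :=
| exec_nil : exec X [] (linit X)
| exec_snoc tr s a s' : exec X tr s -> lstep X s a s' -> exec X (tr ++ [a]) s'.

Definition Tr (L : Type) (X : lts L) (tr : list L) : Prop := exists s, exec X tr s.

Definition interleave (I L : Type) (P : I -> Prop) (Xs : I -> lts L) : lts L :=
  {| lst := forall j : I, lst (Xs j);
     linit := fun j => linit (Xs j);
     lstep := fun f a f' =>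
       exists j, P j /\ lstep (Xs j) (f j) a (f' j) /\
                 (forall k, k <> j -> f' k = f k) |}.

(* Synchronous composition X1 ||_Lam X2; [LamE a] means "a is E-equal to
   some element of Lambda"; [nil] is the empty label. *)
Definition par (L : Type) (LamE : L -> Prop) (emp : L) (X1 X2 : lts L) : lts L :=
  {| lst := (lst X1 * lst X2)%type;
     linit := (linit X1, linit X2);
     lstep := fun s a s' =>
       (a = emp /\ exists a', LamE a' /\ lstep X1 (fst s) a' (fst s') /\
                              lstep X2 (snd s) a' (snd s'))
       \/ (~ LamE a /\ lstep X1 (fst s) a (fst s') /\ snd s' = snd s)
       \/ (~ LamE a /\ lstep X2 (snd s) a (snd s') /\ fst s' = fst s) |}.

(* MSR semantics.  States: multisets of ground facts, represented as
   lists (all constructions are invariant under permutation). *)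
Section MSR.
Variables (Fun Nm X : Type) (E : term Fun Nm -> term Fun Nm -> Prop)
          (pers : X -> bool) (Rs : rule Fun Nm X -> Prop).

Definition msr_step (S : list (fact Fun Nm X)) (a' : list (fact Fun Nm X))
                    (S' : list (fact Fun Nm X)) : Prop :=
  exists (r : rule Fun Nm X) (th : var -> term Fun Nm) l' r',
    Rs r /\ ground_inst th /\
    Forall (@fground _ _ _) l' /\ Forall (@fground _ _ _) a' /\
    Forall (@fground _ _ _) r' /\
    Forall2 (fun f g => feqE E f g) l' (map (fsubst th) (prem r)) /\
    Forall2 (fun f g => feqE E f g) a' (map (fsubst th) (lab r)) /\
    Forall2 (fun f g => feqE E f g) r' (map (fsubst th) (concl r)) /\
    (exists rest, Permutation S (filter (fun f => negb (pers (fsym f))) l' ++ rest) /\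
                  Permutation S' (rest ++ r')) /\
    (forall f, In f l' -> pers (fsym f) = true -> In f S).

Definition msr_lts : lts (list (fact Fun Nm X)) :=
  {| lst := list (fact Fun Nm X); linit := []; lstep := msr_step |}.

End MSR.

Inductive fkind := KAct | KEnv | KState (i : nat).

Record Sig := {
  Fun : Type;
  Nm : Type;
  nfresh : Nm -> bool;               (* true: fresh name, false: public *)
  Eqs : term Fun Nm -> term Fun Nm -> Prop;
  FS : Type;
  farity : FS -> nat;
  persistent : FS -> bool;
  kind : FS -> fkind;
  is_in : FS -> bool;
  is_out : FS -> bool;
  fK : FS; fFr : FS; fIn : FS; fOut : FS;
  fSetup : nat -> FS;
  nroles : nat                       (* roles are i = 0 .. nroles-1 *)
}.

Section Model.
Variable Sg : Sig.

Definition bterm := term (Fun Sg) (Nm Sg).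
Definition bfact := fact (Fun Sg) (Nm Sg) (FS Sg).
Definition brule := rule (Fun Sg) (Nm Sg) (FS Sg).

(* Synchronisation-label identifiers (one per I/O rule rho) *)
Inductive syncid :=
| SIn (i : nat) (F : FS Sg)
| SOut (i : nat) (G : FS Sg)
| SSet (i : nat) (r : brule).

(* Extended fact symbols: original ones, buffers F_i, lambda_rho *)
Inductive xsym :=
| XBase (F : FS Sg)
| XBuf (F : FS Sg) (i : nat)
| XSync (s : syncid).

Definition xpers (x : xsym) : bool :=
  match x with XBase F => persistent Sg F | XBuf F _ => persistent Sg F | XSync _ => false end.

Definition xfact := fact (Fun Sg) (Nm Sg) xsym.
Definition xrule := rule (Fun Sg) (Nm Sg) xsym.

Definition lift (f : bfact) : xfact := mkfact (XBase (fsym f)) (fargs f).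
Definition lift_rule (r : brule) : xrule :=
  mkrule (map lift (prem r)) (map lift (lab r)) (map lift (concl r)).

Definition prefix (pre l : list bterm) : Prop := exists suf, l = pre ++ suf.

Definition in_minus (F : FS Sg) : Prop :=
  is_in Sg F = true /\ forall i, i < nroles Sg -> F <> fSetup Sg i.
Definition buffered (F : FS Sg) : Prop := in_minus F \/ is_out Sg F = true.

Definition state_or_setup (i : nat) (F : FS Sg) : Prop :=
  kind Sg F = KState i \/ F = fSetup Sg i.

(* v is the thread identifier (rid) variable of rule r of role i *)
Definition rid_of (i : nat) (r : brule) (v : var) : Prop :=
  fst v = SFresh /\
  exists pre : list bterm, hd_error pre = Some (TVar v) /\
    forall f, In f (prem r ++ concl r) -> state_or_setup i (fsym f) -> prefix pre (fargs f).

Definition produces_setup (i : nat) (r : brule) : Prop :=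
  exists f, In f (concl r) /\ fsym f = fSetup Sg i.

Definition facts_of (r : brule) : list bfact := prem r ++ lab r ++ concl r.

Definition format (R_env : brule -> Prop) (R_role : nat -> brule -> Prop) : Prop :=
  (forall F i, kind Sg F = KState i -> i < nroles Sg) /\
  (forall F, is_in Sg F = true -> kind Sg F = KEnv) /\
  (forall F, is_out Sg F = true -> kind Sg F = KEnv) /\
  (forall F, ~ (is_in Sg F = true /\ is_out Sg F = true)) /\
  persistent Sg (fK Sg) = true /\ persistent Sg (fFr Sg) = false /\
  persistent Sg (fIn Sg) = false /\ persistent Sg (fOut Sg) = false /\
  is_in Sg (fFr Sg) = true /\ is_in Sg (fIn Sg) = true /\ is_out Sg (fOut Sg) = true /\
  kind Sg (fK Sg) = KEnv /\ is_in Sg (fK Sg) = false /\ is_out Sg (fK Sg) = false /\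
  (forall i, i < nroles Sg -> is_in Sg (fSetup Sg i) = true) /\
  (forall i j, i < nroles Sg -> j < nroles Sg -> fSetup Sg i = fSetup Sg j -> i = j) /\
  (forall r f, (R_env r \/ exists i, i < nroles Sg /\ R_role i r) ->
      In f (facts_of r) -> length (fargs f) = farity Sg (fsym f)) /\
  (exists x, fst x = SFresh /\
     R_env (mkrule [] [] [mkfact (fFr Sg) [TVar x]])) /\
  (forall r f, (R_env r \/ exists i, i < nroles Sg /\ R_role i r) ->
      In f (lab r) -> kind Sg (fsym f) = KAct) /\
  (forall r f, R_env r -> In f (prem r ++ concl r) -> kind Sg (fsym f) = KEnv) /\
  (forall r i, R_env r -> i < nroles Sg -> produces_setup i r ->
      lab r = [] /\ exists v u, fst v = SFresh /\
        concl r = [mkfact (fSetup Sg i) (TVar v :: u)]) /\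
  (forall i, i < nroles Sg -> exists k, 1 <= k /\
     forall r, R_role i r ->
       (forall f, In f (prem r) -> kind Sg (fsym f) = KState i \/ is_in Sg (fsym f) = true) /\
       (forall f, In f (concl r) -> kind Sg (fsym f) = KState i \/ is_out Sg (fsym f) = true) /\
       (exists f, In f (concl r) /\ kind Sg (fsym f) = KState i) /\
       (exists (pre : list bterm) v, length pre = k /\ hd_error pre = Some (TVar v) /\
          fst v = SFresh /\
          forall f, In f (prem r ++ concl r) -> state_or_setup i (fsym f) ->
            prefix pre (fargs f))).

Definition ridv : var := (SFresh, 0).
Definition xsv (k : nat) : list var := map (fun j => (SMsg, Datatypes.S j)) (seq 0 k).
Definition xs (k : nat) : list bterm := map TVar (xsv k).
Definition rid_t : bterm := TVar ridv.

Definition xform (i : nat) (v : var) (f : bfact) (g : xfact) : Prop :=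
  (buffered (fsym f) /\ g = mkfact (XBuf (fsym f) i) (TVar v :: fargs f)) \/
  (~ buffered (fsym f) /\ g = lift f).

Section Roles.
Variables (R_env : brule -> Prop) (R_role : nat -> brule -> Prop).

Definition R_env_minus (r : brule) : Prop :=
  R_env r /\ ~ (exists i, i < nroles Sg /\ produces_setup i r).

Definition setup_rule (i : nat) (r : brule) : Prop :=
  i < nroles Sg /\ R_env r /\ produces_setup i r.

(* R'_i, each rule together with its thread-identifier variable *)
Definition R'_role (i : nat) (rv : xrule * var) : Prop :=
  exists r, R_role i r /\ rid_of i r (snd rv) /\
    Forall2 (xform i (snd rv)) (prem r) (prem (fst rv)) /\
    lab (fst rv) = map lift (lab r) /\
    Forall2 (xform i (snd rv)) (concl r) (concl (fst rv)).

Definition in_rule (i : nat) (F : FS Sg) : xrule :=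
  mkrule [mkfact (XBase F) (xs (farity Sg F))] []
         [mkfact (XBuf F i) (rid_t :: xs (farity Sg F))].
Definition out_rule (i : nat) (G : FS Sg) : xrule :=
  mkrule [mkfact (XBuf G i) (rid_t :: xs (farity Sg G))] []
         [mkfact (XBase G) (xs (farity Sg G))].

Definition R_io (r : xrule) : Prop :=
  exists i, i < nroles Sg /\
   ((exists F, in_minus F /\ r = in_rule i F) \/
    (exists G, is_out Sg G = true /\ r = out_rule i G) \/
    (exists r0, setup_rule i r0 /\ r = lift_rule r0)).

Definition R_intf (r : xrule) : Prop :=
  (exists r0, R_env_minus r0 /\ r = lift_rule r0) \/ R_io r \/
  (exists i v, i < nroles Sg /\ R'_role i (r, v)).

Definition lamIn (i : nat) (F : FS Sg) : xfact :=
  mkfact (XSync (SIn i F)) (rid_t :: xs (farity Sg F)).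
Definition lamOut (i : nat) (G : FS Sg) : xfact :=
  mkfact (XSync (SOut i G)) (rid_t :: xs (farity Sg G)).
Definition lamSet (i : nat) (r0 : brule) : xfact :=
  mkfact (XSync (SSet i r0)) (map TVar (rule_vars r0)).

Definition R_io_role (i : nat) (rv : xrule * var) : Prop :=
  i < nroles Sg /\
  ((exists F, in_minus F /\ snd rv = ridv /\
      fst rv = mkrule [] [lamIn i F] [mkfact (XBuf F i) (rid_t :: xs (farity Sg F))]) \/
   (exists G, is_out Sg G = true /\ snd rv = ridv /\
      fst rv = mkrule [mkfact (XBuf G i) (rid_t :: xs (farity Sg G))] [lamOut i G] []) \/
   (exists r0 u, setup_rule i r0 /\
      concl r0 = [mkfact (fSetup Sg i) (TVar (snd rv) :: u)] /\
      fst rv = mkrule [] [lamSet i r0] (map lift (concl r0)))).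

Definition R_io_env (r : xrule) : Prop :=
  exists i, i < nroles Sg /\
  ((exists F, in_minus F /\
      r = mkrule [mkfact (XBase F) (xs (farity Sg F))] [lamIn i F] []) \/
   (exists G, is_out Sg G = true /\
      r = mkrule [] [lamOut i G] [mkfact (XBase G) (xs (farity Sg G))]) \/
   (exists r0, setup_rule i r0 /\
      r = mkrule (map lift (prem r0)) [lamSet i r0] [])).

Definition R_role_full (i : nat) (rv : xrule * var) : Prop :=
  R'_role i rv \/ R_io_role i rv.

Definition R_role_rid (i : nat) (n : Nm Sg) (r : xrule) : Prop :=
  exists r0 v, R_role_full i (r0, v) /\
    r = rsubst (fun w => if var_eq_dec w v then TName n else TVar w) r0.

Definition R_env_e (r : xrule) : Prop :=
  (exists r0, R_env_minus r0 /\ r = lift_rule r0) \/ R_io_env r.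

Definition Lambda (a : list xfact) : Prop :=
  exists i rv th, R_io_role i rv /\ ground_inst th /\
    a = map (fsubst th) (lab (fst rv)).

Definition LambdaE (a : list xfact) : Prop :=
  exists b, Lambda b /\ meqE (Eqs Sg) a b.

Definition mlts (Rs : xrule -> Prop) : lts (list xfact) :=
  msr_lts (Eqs Sg) xpers Rs.

Definition composed : lts (list xfact) :=
  par LambdaE []
      (interleave (fun p : nat * Nm Sg => fst p < nroles Sg /\ nfresh Sg (snd p) = true)
                  (fun p => mlts (R_role_rid (fst p) (snd p))))
      (mlts R_env_e).

Definition intf : lts (list xfact) := mlts R_intf.

End Roles.
End Model.

(* Main.v *)
Require Import Defs.
From Stdlib Require Import List Permutation Classical.
Import ListNotations.

Section TermLemmas.
Variables (Fn N : Type).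
Notation tm := (term Fn N).

Fixpoint term_ind2 (P : tm -> Prop) (HV : forall v, P (TVar v)) (HN : forall n, P (TName n))
  (HA : forall f ts, Forall P ts -> P (TApp f ts)) (t : tm) {struct t} : P t :=
  match t with
  | TVar v => HV v
  | TName n => HN n
  | TApp f ts => HA f ts ((fix go (l : list tm) : Forall P l :=
        match l with
        | [] => Forall_nil _
        | x :: l' => Forall_cons x (term_ind2 P HV HN HA x) (go l') end) ts)
  end.

Lemma tsubst_comp (th s : var -> tm) t :
  tsubst th (tsubst s t) = tsubst (fun w => tsubst th (s w)) t.
Proof.
  induction t using term_ind2; simpl; auto.
  f_equal. rewrite map_map. apply map_ext_in. intros a Ha.
  rewrite Forall_forall in H. apply H; auto.
Qed.

Lemma ground_tsubst (th : var -> tm) t : ground_inst th -> ground (tsubst th t).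
Proof.
  intro Hg. induction t using term_ind2; simpl; auto.
  - reflexivity.
  - unfold ground. simpl. induction ts; simpl; auto.
    inversion H; subst. unfold ground in H2. rewrite H2. simpl. apply IHts; auto.
Qed.

Lemma ground_comp (th s : var -> tm) : ground_inst th -> ground_inst (fun w => tsubst th (s w)).
Proof. intros Hg v. apply ground_tsubst; auto. Qed.

Lemma F2_map_same A B C (R : B -> C -> Prop) (f : A -> B) g l :
  (forall x, In x l -> R (f x) (g x)) -> Forall2 R (map f l) (map g l).
Proof. induction l; simpl; intros; constructor; auto. Qed.

Lemma F2_trans A (R : A -> A -> Prop) :
  (forall x y z, R x y -> R y z -> R x z) ->
  forall a b c, Forall2 R a b -> Forall2 R b c -> Forall2 R a c.
Proof.
  intros HT a b c H1. revert c. induction H1; intros c H2; inversion H2; subst; constructor; eauto.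
Qed.

Lemma F2_sym A (R : A -> A -> Prop) :
  (forall x y, R x y -> R y x) -> forall a b, Forall2 R a b -> Forall2 R b a.
Proof. intros HS a b H; induction H; constructor; auto. Qed.

Lemma F2_In_l A B (R : A -> B -> Prop) a b x :
  Forall2 R a b -> In x a -> exists y, In y b /\ R x y.
Proof.
  induction 1; simpl; intros Hx; [contradiction|].
  destruct Hx as [<-|Hx]; [exists y; auto|]. destruct (IHForall2 Hx) as (z & ? & ?). exists z; auto.
Qed.

Lemma F2_map_l A B C (R : B -> C -> Prop) (f : A -> B) l m :
  Forall2 (fun x y => R (f x) y) l m -> Forall2 R (map f l) m.
Proof. induction 1; simpl; constructor; auto. Qed.

Lemma F2_map_inv A B (R : B -> B -> Prop) (f : A -> B) (g : A -> B) (l : list A) :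
  Forall2 R (map f l) (map g l) -> forall x, In x l -> R (f x) (g x).
Proof.
  induction l; simpl; intros H x Hx; [contradiction|]. inversion H; subst.
  destruct Hx as [<-|Hx]; auto.
Qed.

Variable E : tm -> tm -> Prop.

Lemma eqE_agree (th1 th2 : var -> tm) t :
  (forall v, In v (tvars t) -> eqE E (th1 v) (th2 v)) -> eqE E (tsubst th1 t) (tsubst th2 t).
Proof.
  induction t using term_ind2; simpl; intros Hv.
  - apply Hv; auto.
  - apply eqE_refl.
  - apply eqE_cong. induction ts; simpl; constructor; inversion H; subst.
    + apply H2. intros v Hi. apply Hv. simpl. apply in_or_app; auto.
    + apply IHts; auto. intros v Hi. apply Hv. simpl. apply in_or_app; auto.
Qed.

Lemma feqE_trans X (f g h : fact Fn N X) : feqE E f g -> feqE E g h -> feqE E f h.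
Proof.
  intros [H1 H2] [H3 H4]. split; [congruence|].
  eapply F2_trans; eauto. intros; eapply eqE_trans; eauto.
Qed.

Lemma feqE_sym X (f g : fact Fn N X) : feqE E f g -> feqE E g f.
Proof.
  intros [H1 H2]. split; [congruence|]. apply F2_sym; auto. intros; apply eqE_sym; auto.
Qed.

Lemma F2feq_trans X (a b c : list (fact Fn N X)) :
  Forall2 (fun f g => feqE E f g) a b -> Forall2 (fun f g => feqE E f g) b c ->
  Forall2 (fun f g => feqE E f g) a c.
Proof. apply F2_trans. intros; eapply feqE_trans; eauto. Qed.

Lemma F2feq_sym X (a b : list (fact Fn N X)) :
  Forall2 (fun f g => feqE E f g) a b -> Forall2 (fun f g => feqE E f g) b a.
Proof. apply F2_sym. intros; apply feqE_sym; auto. Qed.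

Lemma map_fsubst_comp X (th s : var -> tm) (l : list (fact Fn N X)) :
  map (fsubst th) (map (fsubst s) l) = map (fsubst (fun w => tsubst th (s w))) l.
Proof.
  rewrite map_map. apply map_ext. intros [x args]. unfold fsubst; simpl.
  f_equal. rewrite map_map. apply map_ext. intros; apply tsubst_comp.
Qed.

End TermLemmas.

Section Perms.
Variable A : Type.

Lemma upd_lemma (I : Type) (l : list I) (f f' : I -> list A) j :
  NoDup l -> (forall k, ~ In k l -> f k = []) -> (forall k, k <> j -> f' k = f k) ->
  exists l' C, NoDup l' /\ (forall k, ~ In k l' -> f' k = []) /\
    Permutation (concat (map f l)) (f j ++ C) /\ Permutation (concat (map f' l')) (f' j ++ C).
Proof.
  intros Hnd Hout Hoth.
  destruct (classic (In j l)) as [Hin|Hin].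
  - destruct (in_split _ _ Hin) as (l1 & l2 & ->).
    pose proof (NoDup_remove_2 _ _ _ Hnd) as Hn.
    assert (E1 : map f' l1 = map f l1).
    { apply map_ext_in. intros k Hk. apply Hoth. intros ->. apply Hn. apply in_or_app; auto. }
    assert (E2 : map f' l2 = map f l2).
    { apply map_ext_in. intros k Hk. apply Hoth. intros ->. apply Hn. apply in_or_app; auto. }
    exists (l1 ++ j :: l2), (concat (map f l1) ++ concat (map f l2)).
    repeat split; auto.
    + intros k Hk. rewrite Hoth. apply Hout; auto. intros ->; apply Hk, in_or_app; simpl; auto.
    + rewrite map_app, concat_app. simpl. rewrite app_assoc.
      eapply perm_trans; [apply Permutation_app_tail, Permutation_app_comm|]. simpl.
      rewrite app_assoc. apply Permutation_refl.
    + rewrite map_app, concat_app. simpl. rewrite E1, E2. rewrite app_assoc.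
      eapply perm_trans; [apply Permutation_app_tail, Permutation_app_comm|]. simpl.
      rewrite app_assoc. apply Permutation_refl.
  - exists (j :: l), (concat (map f l)). repeat split.
    + constructor; auto.
    + intros k Hk. rewrite Hoth. apply Hout. intro; apply Hk; simpl; auto.
      intros ->; apply Hk; simpl; auto.
    + rewrite (Hout j Hin). apply Permutation_refl.
    + simpl. replace (map f' l) with (map f l); [apply Permutation_refl|].
      apply map_ext_in. intros k Hk. symmetry. apply Hoth. intros ->; auto.
Qed.

Lemma perm_glue1 (X E F1 F2 rX rE : list A) :
  Permutation X (F1 ++ rX) -> Permutation E (F2 ++ rE) ->
  Permutation (X ++ E) ((F1 ++ F2) ++ (rX ++ rE)).
Proof.
  intros H1 H2. eapply perm_trans; [apply Permutation_app; eauto|].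
  rewrite <- !app_assoc. apply Permutation_app_head. rewrite !app_assoc.
  apply Permutation_app_tail. apply Permutation_app_comm.
Qed.

Lemma perm_glue2 (X' E' r1 r2 rX rE : list A) :
  Permutation X' (rX ++ r1) -> Permutation E' (rE ++ r2) ->
  Permutation ((rX ++ rE) ++ (r1 ++ r2)) (X' ++ E').
Proof.
  intros H1 H2. apply Permutation_sym. eapply perm_trans; [apply Permutation_app; eauto|].
  rewrite <- !app_assoc. apply Permutation_app_head. rewrite !app_assoc.
  apply Permutation_app_tail. apply Permutation_app_comm.
Qed.

Lemma perm_c1 (X fj C F rj : list A) :
  Permutation X (fj ++ C) -> Permutation fj (F ++ rj) -> Permutation X (F ++ (rj ++ C)).
Proof.
  intros H1 H2. eapply perm_trans; [exact H1|]. rewrite app_assoc.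
  apply Permutation_app_tail; auto.
Qed.

Lemma perm_c2 (X fj C r1 rj : list A) :
  Permutation X (fj ++ C) -> Permutation fj (rj ++ r1) -> Permutation X ((rj ++ C) ++ r1).
Proof.
  intros H1 H2. eapply perm_trans; [exact H1|]. eapply perm_trans; [apply Permutation_app_tail; exact H2|].
  rewrite <- !app_assoc. apply Permutation_app_head. apply Permutation_app_comm.
Qed.

Lemma F2_perm_refl (l : list (list A)) : Forall2 (@Permutation A) l l.
Proof. induction l; constructor; auto. Qed.
End Perms.

Section Model.
Variable Sg : Sig.
Variables (R_env : brule Sg -> Prop) (R_role : nat -> brule Sg -> Prop).

Lemma mk_intf r th (S X E rX rE : list (xfact Sg)) l1 l2 r1 r2 a :
  R_intf R_env R_role r -> ground_inst th ->
  Forall (@fground _ _ _) (l1 ++ l2) -> Forall (@fground _ _ _) a -> Forall (@fground _ _ _) (r1 ++ r2) ->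
  Forall2 (fun f g => feqE (Eqs Sg) f g) (l1 ++ l2) (map (fsubst th) (prem r)) ->
  Forall2 (fun f g => feqE (Eqs Sg) f g) a (map (fsubst th) (lab r)) ->
  Forall2 (fun f g => feqE (Eqs Sg) f g) (r1 ++ r2) (map (fsubst th) (concl r)) ->
  Permutation S (X ++ E) ->
  Permutation X (filter (fun f => negb (xpers (fsym f))) l1 ++ rX) ->
  Permutation E (filter (fun f => negb (xpers (fsym f))) l2 ++ rE) ->
  (forall g, In g l1 -> xpers (fsym g) = true -> In g X) ->
  (forall g, In g l2 -> xpers (fsym g) = true -> In g E) ->
  msr_step (Eqs Sg) (@xpers Sg) (R_intf R_env R_role) S a ((rX ++ rE) ++ (r1 ++ r2)).
Proof.
  intros Hr Hth G1 G2 G3 F1 F2 F3 PS PX PE H1 H2.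
  exists r, th, (l1 ++ l2), (r1 ++ r2). repeat split; auto.
  - exists (rX ++ rE). split; [|apply Permutation_refl].
    rewrite filter_app. eapply perm_trans; [exact PS|]. apply perm_glue1; auto.
  - intros g Hg Hp. eapply Permutation_in; [apply Permutation_sym; exact PS|].
    apply in_or_app. apply in_app_or in Hg as [Hg|Hg]; [left|right]; auto.
Qed.


Lemma role_norm i n S a S' :
  msr_step (Eqs Sg) (@xpers Sg) (R_role_rid R_env R_role i n) S a S' ->
  msr_step (Eqs Sg) (@xpers Sg) (fun r => exists v, R_role_full R_env R_role i (r, v)) S a S'.
Proof.
  intros (r & th & l' & r' & (r0 & v & Hr0 & ->) & Hth & G1 & G2 & G3 & F1 & F2 & F3 & Hrest & Hp).
  simpl in F1, F2, F3. rewrite map_fsubst_comp in F1, F2, F3.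
  exists r0, (fun w => tsubst th (if var_eq_dec w v then TName n else TVar w)), l', r'.
  repeat split; eauto. apply ground_comp; auto.
Qed.

Lemma io_role_Lambda i rv th a :
  R_io_role R_env i rv -> ground_inst th ->
  Forall2 (fun f g => feqE (Eqs Sg) f g) a (map (fsubst th) (lab (fst rv))) ->
  LambdaE R_env a.
Proof.
  intros Hr Hth Ha. exists (map (fsubst th) (lab (fst rv))). split.
  - exists i, rv, th. auto.
  - exists a. split; auto.
Qed.

Lemma LambdaE_sync a : LambdaE R_env a -> exists g s, In g a /\ fsym g = XSync s.
Proof.
  intros (b & (i & rv & th & Hr & Hth & ->) & (a2 & Hp & Hf)).
  assert (exists s args, lab (fst rv) = [mkfact (XSync s) args]) as (s & args & Hl).
  { destruct Hr as (_ & [(F & _ & _ & ->)|[(G & _ & _ & ->)|(r0 & u & _ & _ & ->)]]); simpl; unfold lamIn, lamOut, lamSet; eauto. }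
  rewrite Hl in Hf. simpl in Hf. inversion Hf as [|x y l1 l2 Hxy Hrest]; subst.
  exists x, s. split.
  - eapply Permutation_in; [apply Permutation_sym; exact Hp|]. simpl; auto.
  - destruct Hxy as [Hxy _]. simpl in Hxy. auto.
Qed.

Lemma lift_base th a (L : list (bfact Sg)) g :
  Forall2 (fun f g => feqE (Eqs Sg) f g) a (map (fsubst th) (map (@lift Sg) L)) ->
  In g a -> exists F : FS Sg, fsym g = XBase Sg F.
Proof.
  intros H Hg. destruct (F2_In_l _ _ _ _ _ _ H Hg) as (y & Hy & [Hs _]).
  rewrite map_map in Hy. apply in_map_iff in Hy as (x & <- & _). simpl in Hs. eauto.
Qed.

Lemma sync_match th1 th2 s1 s2 args1 args2 (a : list (xfact Sg)) :
  Forall2 (fun f g => feqE (Eqs Sg) f g) a (map (fsubst th1) [mkfact (XSync s1) args1]) ->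
  Forall2 (fun f g => feqE (Eqs Sg) f g) a (map (fsubst th2) [mkfact (XSync s2) args2]) ->
  s1 = s2 /\ Forall2 (eqE (Eqs Sg)) (map (tsubst th1) args1) (map (tsubst th2) args2).
Proof.
  intros H1 H2. inversion H1 as [|x1 y1 l1 l1' [A1 B1] R1]; subst.
  inversion H2 as [|x2 y2 l2 l2' [A2 B2] R2]; subst. simpl in *. split; [congruence|].
  eapply F2_trans; [intros; eapply eqE_trans; eauto| |exact B2].
  apply F2_sym; auto. intros; apply eqE_sym; auto.
Qed.


Lemma format_setup : format R_env R_role ->
  forall r i, R_env r -> i < nroles Sg -> produces_setup i r ->
      lab r = [] /\ exists v u, fst v = SFresh /\
        concl r = [mkfact (fSetup Sg i) (TVar v :: u)].
Proof.
  intros Hf. destruct Hf as (_&_&_&_&_&_&_&_&_&_&_&_&_&_&_&_&_&_&_&_&Hset&_). exact Hset.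
Qed.

Lemma io_env_Lambda th a r : format R_env R_role -> R_io_env R_env r -> ground_inst th ->
  Forall2 (fun f g => feqE (Eqs Sg) f g) a (map (fsubst th) (lab r)) ->
  LambdaE R_env a.
Proof.
  intros Hf (i & Hi & [(F & HF & ->)|[(G & HG & ->)|(r0 & Hsr & ->)]]) Hth Ha.
  - apply (io_role_Lambda i (mkrule [] [lamIn Sg i F] [mkfact (@XBuf Sg F i) (rid_t Sg :: xs Sg (farity Sg F))], ridv) th); auto.
    split; auto. left. exists F. auto.
  - apply (io_role_Lambda i (mkrule [mkfact (@XBuf Sg G i) (rid_t Sg :: xs Sg (farity Sg G))] [lamOut Sg i G] [], ridv) th); auto.
    split; auto. right; left. exists G. auto.
  - pose proof Hsr as (Hi' & Hre & Hps).
    destruct (format_setup Hf r0 i Hre Hi Hps) as (_ & v & u & _ & Hc).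
    apply (io_role_Lambda i (mkrule [] [lamSet i r0] (map (@lift Sg) (concl r0)), v) th); auto.
    split; auto. right; right. exists r0, u. repeat split; auto.
Qed.

Lemma in_rule_vars (r0 : brule Sg) f t v :
  In f (concl r0) -> In t (fargs f) -> In v (tvars t) -> In v (rule_vars r0).
Proof.
  intros Hf Ht Hv. unfold rule_vars. apply nodup_In. apply in_flat_map.
  exists f. split. { apply in_or_app; right; apply in_or_app; right; auto. }
  unfold fvars. apply in_flat_map. eauto.
Qed.

Lemma sync_case i r0 v re th1 th2 (a' l1 r1 l2 r2 : list (xfact Sg)) :
  format R_env R_role -> R_io_role R_env i (r0, v) -> R_io_env R_env re ->
  ground_inst th1 -> ground_inst th2 ->
  Forall2 (fun f g => feqE (Eqs Sg) f g) a' (map (fsubst th1) (lab r0)) ->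
  Forall2 (fun f g => feqE (Eqs Sg) f g) a' (map (fsubst th2) (lab re)) ->
  Forall2 (fun f g => feqE (Eqs Sg) f g) l1 (map (fsubst th1) (prem r0)) ->
  Forall2 (fun f g => feqE (Eqs Sg) f g) r1 (map (fsubst th1) (concl r0)) ->
  Forall2 (fun f g => feqE (Eqs Sg) f g) l2 (map (fsubst th2) (prem re)) ->
  Forall2 (fun f g => feqE (Eqs Sg) f g) r2 (map (fsubst th2) (concl re)) ->
  exists r th, R_intf R_env R_role r /\ ground_inst th /\
    Forall2 (fun f g => feqE (Eqs Sg) f g) (l1 ++ l2) (map (fsubst th) (prem r)) /\
    Forall2 (fun f g => feqE (Eqs Sg) f g) [] (map (fsubst th) (lab r)) /\
    Forall2 (fun f g => feqE (Eqs Sg) f g) (r1 ++ r2) (map (fsubst th) (concl r)).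
Proof.
  intros Hf (Hi & [(F & HF & Hv & Hr)|[(G & HG & Hv & Hr)|(r0' & u & Hsr & Hc & Hr)]])
    (i' & Hi' & [(F' & HF' & ->)|[(G' & HG' & ->)|(r0'' & Hsr' & ->)]]) Hth1 Hth2 Ha1 Ha2 Hl1 Hr1 Hl2 Hr2;
  simpl in Hr; subst r0; simpl in *; unfold lamIn, lamOut, lamSet in *;
  destruct (sync_match _ _ _ _ _ _ _ Ha1 Ha2) as [Hs Hargs]; try discriminate Hs;
  injection Hs; intros; subst.
  -
    inversion Hl1; subst. inversion Hr2; subst. rewrite app_nil_r.
    exists (in_rule Sg i' F'), th2. split; [|split; [auto|split; [|split]]].
    + right; left. exists i'. split; auto. left. exists F'. auto.
    + exact Hl2.
    + simpl. constructor.
    + eapply F2feq_trans; [exact Hr1|]. simpl. constructor; [|constructor].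
      split; simpl; auto.
  -
    inversion Hl2; subst. inversion Hr1; subst. rewrite app_nil_r.
    exists (out_rule Sg i' G'), th1. split; [|split; [auto|split; [|split]]].
    + right; left. exists i'. split; auto. right; left. exists G'. auto.
    + exact Hl1.
    + simpl. constructor.
    + simpl. eapply F2feq_trans; [exact Hr2|]. simpl. constructor; [|constructor].
      split; simpl; auto. inversion Hargs; subst. apply F2_sym; auto. intros; apply eqE_sym; auto.
  -
    inversion Hl1; subst. inversion Hr2; subst. rewrite app_nil_r.
    destruct Hsr' as (Hi2 & Hre & Hps).
    destruct (format_setup Hf r0'' i' Hre Hi2 Hps) as (Hlab & _).
    exists (lift_rule r0''), th2. split; [|split; [auto|split; [|split]]].
    + right; left. exists i'. split; auto. right; right. exists r0''. split; [split; [|split]; auto|reflexivity].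
    + exact Hl2.
    + simpl. rewrite Hlab. constructor.
    + simpl. eapply F2feq_trans; [exact Hr1|]. apply F2_map_same.
      intros x Hx. apply in_map_iff in Hx as (f & <- & Hf0).
      rewrite !map_map in Hargs. simpl in Hargs.
      assert (Hag : forall w, In w (rule_vars r0'') -> eqE (Eqs Sg) (th1 w) (th2 w))
        by (intros w Hw; exact (F2_map_inv _ _ _ (fun x => th1 x) (fun x => th2 x) _ Hargs w Hw)).
      split; simpl; auto. apply F2_map_same. intros t Ht. apply eqE_agree.
      intros w Hw. apply Hag. eapply in_rule_vars; eauto.
Qed.

Definition Inv (s : lst (composed R_env R_role)) (S : list (xfact Sg)) : Prop :=
  exists l : list (nat * Nm Sg), NoDup l /\ (forall k, ~ In k l -> (fst s k : list (xfact Sg)) = []) /\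
   Permutation S (concat (map (fun k => (fst s k : list (xfact Sg))) l) ++ (snd s : list (xfact Sg))).

Lemma step_sim s a s' S : format R_env R_role -> Inv s S ->
  lstep (composed R_env R_role) s a s' ->
  exists S', msr_step (Eqs Sg) (@xpers Sg) (R_intf R_env R_role) S a S' /\ Inv s' S'.
Proof.
  intros Hf (l & Hnd & Hout & PS) Hst. destruct s as [f e], s' as [f' e']. simpl in *.
  destruct Hst as [(-> & a' & HL & (j & Pj & Hj & Hoth) & He) | [(HnL & (j & Pj & Hj & Hoth) & ->) | (HnL & He & ->)]].
  -
    apply role_norm in Hj.
    destruct Hj as (r0 & th1 & l1 & r1 & (v & Hrv) & Hth1 & G11 & G12 & G13 & Fl1 & Fa1 & Fr1 & (rj & P1 & P2) & Hp1).
    destruct He as (re & th2 & l2 & r2 & Hre & Hth2 & G21 & G22 & G23 & Fl2 & Fa2 & Fr2 & (rE & Q1 & Q2) & Hp2).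
    destruct (upd_lemma _ _ l f f' j Hnd Hout Hoth) as (l' & C & Hnd' & Hout' & PC1 & PC2).
    destruct (LambdaE_sync a' HL) as (g & sy & Hg & Hsy).
    destruct Hrv as [Hr' | Hio].
    { exfalso. destruct Hr' as (rb & _ & _ & _ & Hlab & _). simpl in Hlab. rewrite Hlab in Fa1.
      destruct (lift_base _ _ _ _ Fa1 Hg) as (F & HF). congruence. }
    destruct Hre as [(r0' & _ & ->)| Hioe].
    { exfalso. simpl in Fa2. destruct (lift_base _ _ _ _ Fa2 Hg) as (F & HF). congruence. }
    destruct (sync_case (fst j) r0 v re th1 th2 a' l1 r1 l2 r2 Hf Hio Hioe Hth1 Hth2 Fa1 Fa2 Fl1 Fr1 Fl2 Fr2)
      as (r & th & Hr & Hth & Fp & Fa & Fc).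
    exists (((rj ++ C) ++ rE) ++ (r1 ++ r2)). split.
    + apply (mk_intf r th S (concat (map f l)) e (rj ++ C) rE l1 l2 r1 r2 []); auto.
      * apply Forall_app; auto.
      * apply Forall_app; auto.
      * eapply perm_c1; eauto.
      * intros g' Hg' Hpg. eapply Permutation_in; [apply Permutation_sym; exact PC1|].
        apply in_or_app; left; auto.
    + exists l'. split; auto. split; [exact Hout'|]. simpl.
      apply perm_glue2; auto. eapply perm_c2; eauto.
  -
    apply role_norm in Hj.
    destruct Hj as (r0 & th1 & l1 & r1 & (v & Hrv) & Hth1 & G11 & G12 & G13 & Fl1 & Fa1 & Fr1 & (rj & P1 & P2) & Hp1).
    destruct (upd_lemma _ _ l f f' j Hnd Hout Hoth) as (l' & C & Hnd' & Hout' & PC1 & PC2).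
    destruct Hrv as [Hr' | Hio].
    2:{ exfalso. apply HnL. apply (io_role_Lambda (fst j) (r0, v) th1); auto. }
    exists (((rj ++ C) ++ e) ++ (r1 ++ [])). split.
    + apply (mk_intf r0 th1 S (concat (map f l)) e (rj ++ C) e l1 [] r1 [] a); try (rewrite app_nil_r; auto; fail); auto.
      * right; right. exists (fst j), v. split; [apply Pj|exact Hr'].
      * eapply perm_c1; eauto.
      * intros g' Hg' Hpg. eapply Permutation_in; [apply Permutation_sym; exact PC1|].
        apply in_or_app; left; auto.
      * intros g' Hg'. destruct Hg'.
    + exists l'. split; auto. split; [exact Hout'|]. simpl.
      apply perm_glue2; [eapply perm_c2; eauto|]. rewrite app_nil_r. apply Permutation_refl.
  -
    destruct He as (re & th2 & l2 & r2 & Hre & Hth2 & G21 & G22 & G23 & Fl2 & Fa2 & Fr2 & (rE & Q1 & Q2) & Hp2).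
    destruct Hre as [(r0 & Hr0 & ->)| Hioe].
    2:{ exfalso. apply HnL. eapply io_env_Lambda; eauto. }
    exists ((concat (map f l) ++ rE) ++ ([] ++ r2)). split.
    + apply (mk_intf (lift_rule r0) th2 S (concat (map f l)) e (concat (map f l)) rE [] l2 [] r2 a); auto.
      * left. eauto.
      * intros g' Hg'. destruct Hg'.
    + exists l. split; auto. split; [exact Hout|]. simpl.
      refine (perm_glue2 _ _ _ [] r2 _ _ _ Q2). rewrite app_nil_r. apply Permutation_refl.
Qed.

Lemma exec_sim tr s : format R_env R_role -> exec (composed R_env R_role) tr s ->
  exists S, exec (intf R_env R_role) tr S /\ Inv s S.
Proof.
  intros Hf H. induction H as [|tr s a s' Hex IH Hst].
  - exists (linit (intf R_env R_role)). split; [constructor|].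
    exists []. split; [constructor|]. split; [intros; reflexivity|]. simpl. constructor.
  - destruct IH as (S & HS & HI). destruct (step_sim s a s' S Hf HI Hst) as (S' & HS' & HI').
    exists S'. split; auto. econstructor; eauto.
Qed.

End Model.

Theorem lemma2 (Sg : Sig) (R_env : brule Sg -> Prop) (R_role : nat -> brule Sg -> Prop) :
  format R_env R_role ->
  forall tr, Tr (composed R_env R_role) tr ->
  exists tr', Tr (intf R_env R_role) tr' /\ Forall2 (@Permutation (xfact Sg)) tr tr'.
Proof.
  intros Hf tr (s & Hex). destruct (exec_sim Sg R_env R_role tr s Hf Hex) as (S & HS & _).
  exists tr. split; [exists S; auto|]. apply F2_perm_refl.
Qed.
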